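(* Let $P=\mathbb{Q}[x_1,\dots,x_n]$ and let $\sigma$ be a term ordering on $\mathbb{T}^n$. Let $I$ be a non-zero ideal in $P$, and let $G_\sigma=\{g_1,\dots,g_r\}$ be its reduced $\sigma$-Gröbner basis, indexed so that $\mathrm{LT}_\sigma(g_1)<_\sigma\cdots<_\sigma \mathrm{LT}_\sigma(g_r)$. Let $\tilde G=\{\tilde g_1,\dots,\tilde g_s\}$ be a minimal strong $\sigma$-Gröbner basis of the ideal $J=\langle \operatorname{prim}(G_\sigma)\rangle\subseteq\mathbb{Z}[x_1,\dots,x_n]$. Then: (a) the elements of $\tilde G$ can be indexed so that $\mathrm{LT}_\sigma(\tilde g_i)=\mathrm{LT}_\sigma(g_i)$ for $i=1,\dots,r$, while for $i=r+1,\dots,s$ each $\mathrm{LT}_\sigma(\tilde g_i)$ is a proper multiple of $\mathrm{LT}_\sigma(g_k)$ for some $k\le r$; (b) with this indexing, the subset $\{\tilde g_1,\dots,\tilde g_r\}$ is a minimal $\sigma$-Gröbner basis of $I$ in $P$; (c) with this indexing, $\mathrm{LC}_\sigma(\tilde g_i)$ divides $\mathrm{LC}_\sigma(\operatorname{prim}(g_i))$ for $i=1,\dots,r$; (d) with this indexing, if for some $i\in\{1,\dots,r\}$ there is a prime $p$ such that $p\mid\operatorname{den}(g_i)$ but $p\nmid\operatorname{den}(g_j)$ for every $j=1,\dots,i-1$, then $p\mid \mathrm{LC}_\sigma(\tilde g_i)$.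
   Context: $\mathbb{T}^n$ is the monoid of power-products in $x_1,\dots,x_n$; $\mathrm{LT}_\sigma$, $\mathrm{LC}_\sigma$, $\mathrm{LM}_\sigma$ denote leading power-product (term), leading coefficient and leading monomial $\mathrm{LC}_\sigma(f)\cdot\mathrm{LT}_\sigma(f)$. For $f\in P$, $\operatorname{den}(f)$ is the positive least common multiple of the denominators of the coefficients of $f$. For non-zero $f\in P$, with $c$ the integer content of $f\cdot\operatorname{den}(f)\in\mathbb{Z}[x_1,\dots,x_n]$, the primitive integral part is $\operatorname{prim}(f)=c^{-1}f\cdot\operatorname{den}(f)$; for a set $F$, $\operatorname{prim}(F)=\{\operatorname{prim}(f):f\in F\}$. Non-zero polynomials $g_1,\dots,g_s\in\mathbb{Z}[x_1,\dots,x_n]$ form a strong $\sigma$-Gröbner basis of $J=\langle g_1,\dots,g_s\rangle$ if for each non-zero $f\in J$ some $\mathrm{LM}_\sigma(g_i)$ divides $\mathrm{LM}_\sigma(f)$ in $\mathbb{Z}[x_1,\dots,x_n]$; it is minimal if moreover $\mathrm{LM}_\sigma(g_i)\nmid\mathrm{LM}_\sigma(g_j)$ whenever $i\neq j$. *)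

(* Defs.v *)
From HB Require Import structures.
From mathcomp Require Import all_boot all_order all_algebra.
From mathcomp Require Import mpoly.

Set Implicit Arguments.
Unset Strict Implicit.
Unset Printing Implicit Defensive.

Import Order.TTheory GRing.Theory Num.Theory.
Local Open Scope ring_scope.

Definition term_order (n : nat) (le : rel 'X_{1..n}) : Prop :=
  [/\ reflexive le, antisymmetric le, transitive le & total le] /\
  (forall m1 m2 m : 'X_{1..n}, le m1 m2 -> le (m1 + m)%MM (m2 + m)%MM) /\
  (forall m : 'X_{1..n}, le 0%MM m).

Definition ltT (n : nat) (le : rel 'X_{1..n}) (m1 m2 : 'X_{1..n}) : bool :=
  le m1 m2 && (m1 != m2).

Definition tdvd (n : nat) (m1 m2 : 'X_{1..n}) : bool := (m1 <= m2)%MM.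

Section Leading.
Variables (n : nat) (R : nzRingType) (le : rel 'X_{1..n}).

(* leading term LT_sigma(f): the le-maximum of the support (0%MM if f = 0) *)
Definition LT (f : {mpoly R[n]}) : 'X_{1..n} :=
  foldr (fun m acc => if le acc m then m else acc) 0%MM (msupp f).

Definition LC (f : {mpoly R[n]}) : R := f@_(LT f).

End Leading.

Definition is_ideal (n : nat) (R : comNzRingType) (I : {mpoly R[n]} -> Prop)
  : Prop :=
  [/\ I 0,
      (forall f g, I f -> I g -> I (f + g))
    & (forall h f, I f -> I (h * f))].

Definition in_ideal_gen (n : nat) (R : comNzRingType) (F : seq {mpoly R[n]})
    (f : {mpoly R[n]}) : Prop :=
  exists c : 'I_(size F) -> {mpoly R[n]}, f = \sum_(i < size F) c i * F`_i.

Section GBField.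
Variables (n : nat) (le : rel 'X_{1..n}).

Definition is_GB (I : {mpoly rat[n]} -> Prop) (G : seq {mpoly rat[n]}) : Prop :=
  [/\ forall g, g \in G -> g != 0,
      forall g, g \in G -> I g
    & forall f, I f -> f != 0 -> exists2 g, g \in G & tdvd (LT le g) (LT le f)].

Definition is_minimal_GB (I : {mpoly rat[n]} -> Prop) (G : seq {mpoly rat[n]})
  : Prop :=
  is_GB I G /\
  (forall i j, (i < size G)%N -> (j < size G)%N -> i != j ->
     ~~ tdvd (LT le G`_i) (LT le G`_j)).

Definition is_reduced_GB (I : {mpoly rat[n]} -> Prop) (G : seq {mpoly rat[n]})
  : Prop :=
  [/\ is_GB I G, uniq G,
      (forall g, g \in G -> LC le g = 1)
    & (forall g h, g \in G -> h \in G -> g != h ->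
         forall m, m \in msupp g -> ~~ tdvd (LT le h) m)].

End GBField.

Section Prim.
Variable n : nat.

Definition den (f : {mpoly rat[n]}) : nat :=
  \big[lcmn/1%N]_(m <- msupp f) `|denq f@_m|%N.

Definition icoef (f : {mpoly rat[n]}) (m : 'X_{1..n}) : int :=
  numq (f@_m * (den f)%:R).

Definition content (f : {mpoly rat[n]}) : nat :=
  \big[gcdn/0%N]_(m <- msupp f) `|icoef f m|%N.

(* prim(f) = c^{-1} * f * den(f), as an element of Z[x_1..x_n] *)
Definition prim (f : {mpoly rat[n]}) : {mpoly int[n]} :=
  \sum_(m <- msupp f) ((icoef f m %/ (content f)%:Z)%Z *: 'X_[m]).

Definition toQ (f : {mpoly int[n]}) : {mpoly rat[n]} := map_mpoly intr f.

End Prim.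

Section GBZ.
Variables (n : nat) (le : rel 'X_{1..n}).

Definition LM_dvd (g f : {mpoly int[n]}) : bool :=
  tdvd (LT le g) (LT le f) && (LC le g %| LC le f)%Z.

Definition is_strong_GB (F G : seq {mpoly int[n]}) : Prop :=
  [/\ forall g, g \in G -> g != 0,
      (forall f, in_ideal_gen G f <-> in_ideal_gen F f)
    & forall f, in_ideal_gen G f -> f != 0 ->
        exists2 g, g \in G & LM_dvd g f].

Definition is_minimal_strong_GB (F G : seq {mpoly int[n]}) : Prop :=
  is_strong_GB F G /\
  (forall i j, (i < size G)%N -> (j < size G)%N -> i != j ->
     ~~ LM_dvd G`_i G`_j).

End GBZ.

(* Main.v *)
Require Import Defs.
From HB Require Import structures.
From mathcomp Require Import all_boot all_order all_algebra.
From mathcomp Require Import mpoly.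
From mathcomp Require Import ring zify.
From Stdlib Require Import Classical ClassicalEpsilon.
Import Order.TTheory GRing.Theory Num.Theory.
Local Open Scope ring_scope.

Set Implicit Arguments.
Unset Strict Implicit.
Unset Printing Implicit Defensive.

Section LTlemmas.
Variables (n : nat) (le : rel 'X_{1..n}) (Hle : term_order le).
Implicit Types a b c m u : 'X_{1..n}.

Lemma le_refl m : le m m.
Proof. by case: Hle => [[? ? ? ?] _]. Qed.
Lemma le_anti a b : le a b -> le b a -> a = b.
Proof. by case: Hle => [[? H ? ?] _] h1 h2; apply: H; rewrite h1 h2. Qed.
Lemma le_trans' a b c : le a b -> le b c -> le a c.
Proof. by case: Hle => [[? ? H ?] _] h1 h2; apply: (H b). Qed.
Lemma le_total a b : le a b || le b a.
Proof. by case: Hle => [[? ? ? H] _]. Qed.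
Lemma le0 m : le 0%MM m.
Proof. by case: Hle => [_ [_ H]]. Qed.
Lemma le_addr a b u : le a b -> le (a + u)%MM (b + u)%MM.
Proof. by case: Hle => [_ [H _]]; apply: H. Qed.
Lemma le_addl a b u : le a b -> le (u + a)%MM (u + b)%MM.
Proof. by rewrite !(addmC u); apply: le_addr. Qed.
Lemma le_tdvd a b : tdvd a b -> le a b.
Proof.
rewrite /tdvd => h; rewrite -(submK h).
have := le_addr a (le0 (b - a)%MM); by rewrite add0m.
Qed.
Lemma tdvd_anti a b : tdvd a b -> tdvd b a -> a = b.
Proof.
rewrite /tdvd => /mnm_lepP h1 /mnm_lepP h2; apply/mnmP => i.
by apply/eqP; rewrite eqn_leq h1 h2.
Qed.
Lemma tdvd_trans a b c : tdvd a b -> tdvd b c -> tdvd a c.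
Proof. by rewrite /tdvd => h1 h2; apply: lepm_trans h2. Qed.

Lemma ltT_trans a b c : ltT le a b -> ltT le b c -> ltT le a c.
Proof.
rewrite /ltT => /andP[h1 n1] /andP[h2 n2]; rewrite (le_trans' h1 h2) /=.
apply/eqP => E; subst c; by rewrite (le_anti h1 h2) eqxx in n1.
Qed.
Lemma le_ltT_trans a b c : le a b -> ltT le b c -> ltT le a c.
Proof.
move=> h1 /andP[h2 n2]; rewrite /ltT (le_trans' h1 h2) /=.
apply/eqP => E; subst c; by rewrite (le_anti h2 h1) eqxx in n2.
Qed.
Lemma ltT_le_anti a b : ltT le a b -> le b a -> False.
Proof. by rewrite /ltT => /andP[h1 n1] h2; rewrite (le_anti h1 h2) eqxx in n1. Qed.

Definition fstep (m acc : 'X_{1..n}) := if le acc m then m else acc.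

Lemma foldr_mem (s : seq 'X_{1..n}) : s != [::] -> foldr fstep 0%MM s \in s.
Proof.
elim: s => // x s IH _ /=; rewrite /fstep.
case: s IH => [|y s] IH /=; first by rewrite le0 mem_seq1.
case: ifP => _; first by rewrite mem_head.
by rewrite in_cons IH // orbT.
Qed.

Lemma fstep_ge x acc : le x (fstep x acc) /\ le acc (fstep x acc).
Proof.
rewrite /fstep; case: ifP => h; first by split; [apply: le_refl|].
split; last exact: le_refl.
by case/orP: (le_total x acc) => //; rewrite h.
Qed.

Lemma foldr_max (s : seq 'X_{1..n}) m : m \in s -> le m (foldr fstep 0%MM s).
Proof.
elim: s => // x s IH; rewrite in_cons /= => /orP[/eqP->|ms].
  exact: (fstep_ge _ _).1.
exact: le_trans' (IH ms) (fstep_ge _ _).2.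
Qed.

Lemma msupp_0 (R : nzRingType) : msupp (0 : {mpoly R[n]}) = [::].
Proof. by apply/eqP; rewrite msupp_eq0. Qed.


Lemma LT_mem (R : nzRingType) (f : {mpoly R[n]}) : f != 0 -> LT le f \in msupp f.
Proof. by move=> h; apply: foldr_mem; rewrite msupp_eq0. Qed.
Lemma LT_max (R : nzRingType) (f : {mpoly R[n]}) m : m \in msupp f -> le m (LT le f).
Proof. exact: foldr_max. Qed.
Lemma LT_eq (R : nzRingType) (f : {mpoly R[n]}) m : m \in msupp f -> (forall m', m' \in msupp f -> le m' m) -> LT le f = m.
Proof.
move=> h1 h2; apply: le_anti; last exact: LT_max.
by apply: h2; apply: LT_mem; apply/eqP => E; rewrite E msupp_0 in h1.
Qed.
Lemma LC_neq0 (R : nzRingType) (f : {mpoly R[n]}) : f != 0 -> LC le f != 0.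
Proof. by move/LT_mem; rewrite mcoeff_msupp. Qed.
Lemma LT_ext (R R' : nzRingType) (f : {mpoly R[n]}) (g : {mpoly R'[n]}) : msupp f =i msupp g -> LT le f = LT le g.
Proof.
move=> E; have [f0|nz] := eqVneq f 0; first subst f.
  have H : forall x, x \notin msupp g by move=> x; rewrite -E msupp_0.
  have: msupp g = [::].
    by case: (msupp g) H => // x s H; have := H x; rewrite mem_head.
  by move/msuppnil0 => ->; rewrite /LT !msupp_0.
have nzg : g != 0.
  by apply/eqP=> g0; have := LT_mem nz; rewrite E g0 msupp_0.
apply: LT_eq; first by rewrite E; apply: LT_mem.
by move=> m'; rewrite E; apply: LT_max.
Qed.

End LTlemmas.

Lemma good_exists (a : nat -> nat) N :
  exists i, (N <= i)%N /\ forall j, (i < j)%N -> (a i <= a j)%N.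
Proof.
suff H : forall v j, (N <= j)%N -> a j = v ->
    exists i, (N <= i)%N /\ forall j, (i < j)%N -> (a i <= a j)%N.
  exact: (H (a N) N).
elim/ltn_ind => v IH j Nj ajv.
case: (classic (forall k, (j < k)%N -> (a j <= a k)%N)) => [H|H]; first by exists j.
have [k Hk] := not_all_ex_not _ _ H.
have [jk ak] := imply_to_and _ _ Hk.
have ak' : (a k < v)%N by rewrite -ajv ltnNge; apply/negP.
apply: (IH (a k) ak' k) => //.
exact: leq_trans Nj (ltnW jk).
Qed.

Lemma nondecr_sub (a : nat -> nat) : exists phi : nat -> nat,
  (forall k, (phi k < phi k.+1)%N) /\ (forall k, (a (phi k) <= a (phi k.+1))%N).
Proof.
pose g N := proj1_sig (constructive_indefinite_description _ (good_exists a N)).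
have gP N : (N <= g N)%N /\ forall j, (g N < j)%N -> (a (g N) <= a j)%N.
  exact: (proj2_sig (constructive_indefinite_description _ (good_exists a N))).
pose phi := fix phi k := if k is k'.+1 then g (phi k').+1 else g 0%N.
have phiS k : phi k.+1 = g (phi k).+1 by [].
have phig k : exists M, phi k = g M.
  case: k => [|k]; first by exists 0%N.
  by exists (phi k).+1.
exists phi; split => k.
  by rewrite phiS; exact: (gP _).1.
have [M E] := phig k.
rewrite E; apply: (gP M).2.
by rewrite phiS E; exact: (gP _).1.
Qed.

Lemma dickson_gen n (f : nat -> 'X_{1..n}) k : (k <= n)%N ->
  exists phi : nat -> nat, (forall j, (phi j < phi j.+1)%N) /\
    forall j (i : 'I_n), (i < k)%N -> (f (phi j) i <= f (phi j.+1) i)%N.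
Proof.
elim: k => [|k IH] kn; first by exists id; split.
have [phi [phiI phiM]] := IH (ltnW kn).
pose ik : 'I_n := Ordinal kn.
have [psi [psiI psiM]] := nondecr_sub (fun j => f (phi j) ik).
exists (fun j => phi (psi j)); split => [j|j i].
  exact: (homo_ltn ltn_trans phiI) (psiI j).
rewrite ltnS leq_eqVlt => /orP[/eqP ei|ilt].
  by have -> : i = ik by apply: val_inj.
have mono := homo_leq (r := leq) (f := fun j => f (phi j) i) (@leqnn) (@leq_trans) (fun j => phiM j i ilt).
exact: mono (ltnW (psiI j)).
Qed.

Lemma dickson n (f : nat -> 'X_{1..n}) : exists i j, (i < j)%N /\ (f i <= f j)%MM.
Proof.
have [phi [phiI phiM]] := dickson_gen f (leqnn n).
exists (phi 0%N), (phi 1%N); split; first exact: phiI.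
by apply/mnm_lepP => i; apply: phiM; exact: ltn_ord.
Qed.

Lemma no_desc n (le : rel 'X_{1..n}) (Hle : term_order le) (x : nat -> 'X_{1..n}) :
  (forall k, ltT le (x k.+1) (x k)) -> False.
Proof.
move=> H; have [i [j [ij xij]]] := dickson x.
have : ltT le (x j) (x i).
  apply: (homo_ltn (r := fun a b => ltT le b a)) => //.
  move=> y x' z h1 h2; exact: (ltT_trans Hle h2 h1).
by move/(ltT_le_anti Hle); apply; apply: le_tdvd.
Qed.

Section PInt.
Variable p : nat.
Hypothesis pP : prime p.

Definition pint (x : rat) := exists a b : int, ~~ (p %| `|b|)%N /\ x = a%:~R / b%:~R.

Lemma pint_b0 (b : int) : ~~ (p %| `|b|)%N -> (b%:~R : rat) != 0.
Proof. by apply: contra; rewrite intr_eq0 => /eqP->; rewrite dvdn0. Qed.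

Lemma ndvdM (b1 b2 : int) : ~~ (p %| `|b1|)%N -> ~~ (p %| `|b2|)%N -> ~~ (p %| `|(b1 * b2)%R|)%N.
Proof. by move=> h1 h2; rewrite abszM Euclid_dvdM // negb_or h1 h2. Qed.

Lemma pint_int (a : int) : pint a%:~R.
Proof.
exists a, 1; split; last by rewrite divr1.
by rewrite dvdn1; case: (p) pP => // -[].
Qed.

Lemma pintD x y : pint x -> pint y -> pint (x + y).
Proof.
move=> [a1 [b1 [h1 ->]]] [a2 [b2 [h2 ->]]].
exists (a1 * b2 + a2 * b1), (b1 * b2); split; first exact: ndvdM.
have := pint_b0 h1; have := pint_b0 h2 => n2 n1.
rewrite !rmorphD !rmorphM /=; field.
by rewrite n1 n2.
Qed.

Lemma pintM x y : pint x -> pint y -> pint (x * y).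
Proof.
move=> [a1 [b1 [h1 ->]]] [a2 [b2 [h2 ->]]].
exists (a1 * a2), (b1 * b2); split; first exact: ndvdM.
have := pint_b0 h1; have := pint_b0 h2 => n2 n1.
rewrite !rmorphM /=; field.
by rewrite n1 n2.
Qed.

Lemma pintN x : pint x -> pint (- x).
Proof.
move=> [a [b [h ->]]]; exists (- a), b; split => //.
by rewrite rmorphN /= mulNr.
Qed.

Lemma pint_divz x (c : int) : pint x -> ~~ (p %| `|c|)%N -> pint (x / c%:~R).
Proof.
move=> [a [b [h ->]]] hc; exists a, (b * c); split; first exact: ndvdM.
have := pint_b0 h; have := pint_b0 hc => n2 n1.
rewrite !rmorphM /=; field.
by rewrite n1 n2.
Qed.

Lemma pint_denq x : pint x -> ~~ (p %| `|denq x|)%N.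
Proof.
move=> [a [b [h E]]].
have nb := pint_b0 h.
have E2 : numq x * b = a * denq x.
  apply: (@intr_inj rat); rewrite !rmorphM /= numqE E.
  by field.
have : (`|denq x| %| `|b|)%N.
  have : (`|denq x| %| `|numq x| * `|b|)%N by rewrite -abszM E2 abszM dvdn_mull.
  by rewrite Gauss_dvdr // coprime_sym coprime_num_den.
by move=> d; apply: contra h => pd; apply: dvdn_trans d.
Qed.

Lemma denq_pint x : ~~ (p %| `|denq x|)%N -> pint x.
Proof. by move=> h; exists (numq x), (denq x); split => //; rewrite divq_num_den. Qed.

End PInt.

Section MpolyLemmas.
Variable n : nat.

Lemma mcoeffMX_gen (R : nzRingType) (q : {mpoly R[n]}) u v :
  (q * 'X_[u])@_v = if (u <= v)%MM then q@_(v - u) else 0.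
Proof.
case: ifP => h.
  by rewrite -{1}(submK h) addmC mcoeffMX.
apply: memN_msupp_eq0; rewrite (perm_mem (msuppMX q u)).
by apply/mapP => -[m' _ E]; rewrite E lem_addr in h.
Qed.

Lemma msuppMX_mem (R : nzRingType) (q : {mpoly R[n]}) u v :
  v \in msupp (q * 'X_[u]) -> exists2 m', m' \in msupp q & v = (u + m')%MM.
Proof. by rewrite (perm_mem (msuppMX q u)) => /mapP[m' h E]; exists m'. Qed.

Lemma sum_coef_seq (R : zmodType) (r : seq 'X_{1..n}) (c : 'X_{1..n} -> R) m :
  uniq r -> \sum_(j <- r) (if j == m then c j else 0) = if m \in r then c m else 0.
Proof.
elim: r => [|x r IH]; first by rewrite big_nil.
rewrite big_cons /= in_cons => /andP[xr ur]; rewrite IH //.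
case: (eqVneq x m) => [E|ne].
  by subst x; rewrite (negbTE xr) addr0 ?eqxx /=.
by rewrite add0r.
Qed.

Lemma mcoeff_toQ (f : {mpoly int[n]}) m : (toQ f)@_m = (f@_m)%:~R.
Proof. by rewrite /toQ mcoeff_map_mpoly. Qed.

Lemma msupp_toQ (f : {mpoly int[n]}) : msupp (toQ f) =i msupp f.
Proof. by move=> m; rewrite !mcoeff_msupp mcoeff_toQ intr_eq0. Qed.

Lemma toQ_eq0 (f : {mpoly int[n]}) : (toQ f == 0) = (f == 0).
Proof.
apply/eqP/eqP => [h|->]; last by rewrite /toQ rmorph0.
by apply/mpolyP => m; apply: (@intr_inj rat); rewrite -mcoeff_toQ h !mcoeff0.
Qed.

Lemma LT_toQ (le : rel 'X_{1..n}) (Hle : term_order le) (f : {mpoly int[n]}) :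
  LT le (toQ f) = LT le f.
Proof. apply: (LT_ext Hle). exact: msupp_toQ. Qed.

Lemma dvdn_biglcm (T : eqType) (s : seq T) (F : T -> nat) x :
  x \in s -> (F x %| \big[lcmn/1%N]_(y <- s) F y)%N.
Proof.
elim: s => // y s IH; rewrite big_cons in_cons => /orP[/eqP->|/IH h].
  exact: dvdn_lcml.
exact: dvdn_trans h (dvdn_lcmr _ _).
Qed.

Lemma biggcd_dvdn (T : eqType) (s : seq T) (F : T -> nat) x :
  x \in s -> (\big[gcdn/0%N]_(y <- s) F y %| F x)%N.
Proof.
elim: s => // y s IH; rewrite big_cons in_cons => /orP[/eqP->|/IH h].
  exact: dvdn_gcdl.
exact: dvdn_trans (dvdn_gcdr _ _) h.
Qed.

Lemma biglcm_dvd_prime (T : eqType) (s : seq T) (F : T -> nat) p :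
  prime p -> (p %| \big[lcmn/1%N]_(y <- s) F y)%N -> exists2 x, x \in s & (p %| F x)%N.
Proof.
move=> pP; elim: s => [|y s IH]; first by rewrite big_nil dvdn1 => /eqP E; rewrite E in pP.
rewrite big_cons => h.
have : (p %| F y * \big[lcmn/1%N]_(j <- s) F j)%N.
  apply: dvdn_trans h _; rewrite dvdn_lcm dvdn_mulr ?dvdn_mull //.
rewrite Euclid_dvdM // => /orP[h1|/IH [x xs px]]; first by exists y; rewrite ?mem_head.
by exists x; rewrite // in_cons xs orbT.
Qed.

Lemma den_gt0 (g : {mpoly rat[n]}) : (0 < den g)%N.
Proof.
rewrite /den; elim: (msupp g) => [|y s IH]; first by rewrite big_nil.
by rewrite big_cons lcmn_gt0 IH andbT absz_gt0 denq_neq0.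
Qed.

Lemma denq_dvd_den (g : {mpoly rat[n]}) m : (`|denq g@_m| %| den g)%N.
Proof.
have [ms|nms] := boolP (m \in msupp g); first exact: dvdn_biglcm.
by rewrite (memN_msupp_eq0 nms) -(rmorph0 (intr : int -> rat)) denq_int dvd1n.
Qed.

Lemma int_mul_den (x : rat) (d : nat) : (`|denq x| %| d)%N -> exists z : int, x * d%:R = z%:~R.
Proof.
case/dvdnP => k ->; exists (numq x * k%:Z).
rewrite natrM rmorphM /= numqE -mulrA [X in x * X]mulrC; congr (_ * (_ * _)).
  by rewrite pmulrn absz_denq.
Qed.

Lemma icoefE (g : {mpoly rat[n]}) m : (icoef g m)%:~R = g@_m * (den g)%:R.
Proof.
have [z E] := int_mul_den (denq_dvd_den g m).
by rewrite /icoef E numq_int.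
Qed.

Lemma content_neq0 (g : {mpoly rat[n]}) : g != 0 -> content g != 0%N.
Proof.
move=> nz; have [m ms] : exists m, m \in msupp g.
  by case E: (msupp g) => [|m s]; [move: nz; rewrite -msupp_eq0 E | exists m; rewrite mem_head].
have d := biggcd_dvdn (fun m => `|icoef g m|%N) ms.
apply/eqP => c0; move: d; rewrite -/(content g) c0 dvd0n absz_eq0 => /eqP h.
have : (icoef g m)%:~R = 0 :> rat by rewrite h.
rewrite icoefE => /eqP; rewrite mulf_eq0 pnatr_eq0 -[den g == 0%N]negbK -lt0n den_gt0 orbF.
by apply/negP; rewrite -mcoeff_msupp.
Qed.

Lemma toQ_prim (g : {mpoly rat[n]}) : g != 0 ->
  toQ (prim g) = ((den g)%:R / (content g)%:R) *: g.
Proof.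
move=> nz; apply/mpolyP => m; rewrite mcoeff_toQ mcoeffZ /prim raddf_sum /=.
under eq_bigr => j _ do rewrite mcoeffZ mcoeffX mulr_natr mulrb.
rewrite sum_coef_seq ?msupp_uniq //.
case: ifP => ms; last by rewrite (memN_msupp_eq0 (negbT ms)) mulr0.
have cnz : ((content g)%:R : rat) != 0 by rewrite pnatr_eq0 content_neq0.
have dv : ((content g)%:Z %| icoef g m)%Z.
  by rewrite dvdzE /=; apply: biggcd_dvdn ms.
apply: (mulIf cnz).
have -> : ((icoef g m %/ (content g)%:Z)%Z%:~R : rat) * (content g)%:R = (icoef g m)%:~R.
  by rewrite pmulrn -rmorphM /= divzK.
by rewrite icoefE; field.
Qed.

End MpolyLemmas.

Section Ideals.
Variables (n : nat) (R : comNzRingType).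

Lemma ideal_sum (I : {mpoly R[n]} -> Prop) (HI : is_ideal I) k (F : 'I_k -> {mpoly R[n]}) :
  (forall i, I (F i)) -> I (\sum_(i < k) F i).
Proof. case: HI => I0 Iadd _ h; apply: (big_ind I) => //. Qed.

Lemma ideal_mul (I : {mpoly R[n]} -> Prop) (HI : is_ideal I) h f : I f -> I (h * f).
Proof. by case: HI => _ _; apply. Qed.

Lemma ideal_Z (I : {mpoly R[n]} -> Prop) (HI : is_ideal I) c f : I f -> I (c *: f).
Proof. by rewrite -mul_mpolyC; apply: ideal_mul. Qed.

Lemma ideal_add (I : {mpoly R[n]} -> Prop) (HI : is_ideal I) f g : I f -> I g -> I (f + g).
Proof. by case: HI => _ + _; apply. Qed.

Lemma ideal_sub (I : {mpoly R[n]} -> Prop) (HI : is_ideal I) f g : I f -> I g -> I (f - g).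
Proof.
move=> hf hg; apply: ideal_add => //.
by rewrite -scaleN1r; apply: ideal_Z.
Qed.

Lemma gen_ideal (F : seq {mpoly R[n]}) : is_ideal (in_ideal_gen F).
Proof.
split.
- by exists (fun _ => 0); rewrite big1 // => i _; rewrite mul0r.
- move=> f g [c1 ->] [c2 ->]; exists (fun i => c1 i + c2 i).
  by rewrite -big_split; apply: eq_bigr => i _; rewrite mulrDl.
- move=> h f [c ->]; exists (fun i => h * c i).
  by rewrite mulr_sumr; apply: eq_bigr => i _; rewrite mulrA.
Qed.

Lemma gen_mem (F : seq {mpoly R[n]}) x : x \in F -> in_ideal_gen F x.
Proof.
move=> xF; have hi : (index x F < size F)%N by rewrite index_mem.
exists (fun j => ((j : nat) == index x F)%:R).
rewrite (bigD1 (Ordinal hi)) //= eqxx mul1r nth_index // big1 ?addr0 // => j ne.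
have -> : ((j : nat) == index x F) = false.
  by apply/negbTE; apply: contra ne => /eqP e; apply/eqP/val_inj.
by rewrite mul0r.
Qed.

End Ideals.

Lemma gen_toQ n (I : {mpoly rat[n]} -> Prop) (HI : is_ideal I) (F : seq {mpoly int[n]}) f :
  (forall x, x \in F -> I (toQ x)) -> in_ideal_gen F f -> I (toQ f).
Proof.
move=> hF [c ->]; rewrite /toQ rmorph_sum /=; apply: ideal_sum => // i.
rewrite rmorphM /=; apply: ideal_mul => //; apply: hF; exact: mem_nth.
Qed.

Lemma LT_scale n le (Hle : term_order le) (R : idomainType) (c : R) (f : {mpoly R[n]}) :
  c != 0 -> LT le (c *: f) = LT le f.
Proof.
move=> nz; apply: (LT_ext Hle) => m.
by rewrite !mcoeff_msupp mcoeffZ mulf_eq0 (negbTE nz).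
Qed.

Section Main.
Variables (n : nat) (le : rel 'X_{1..n}).
Hypothesis Hle : term_order le.
Variable I : {mpoly rat[n]} -> Prop.
Hypothesis HI : is_ideal I.
Variable G : seq {mpoly rat[n]}.
Hypothesis HG : is_reduced_GB le I G.
Hypothesis Hsort : forall i, (i.+1 < size G)%N -> ltT le (LT le G`_i) (LT le G`_i.+1).
Variable Gt : seq {mpoly int[n]}.
Hypothesis HGt : is_minimal_strong_GB le (map (@prim n) G) Gt.

Local Notation t i := (LT le G`_i).
Local Notation r := (size G).
Local Notation s := (size Gt).

Lemma G_nzg g : g \in G -> g != 0.
Proof. by case: HG => [[h _ _] _ _ _]; apply: h. Qed.
Lemma G_nz i : (i < r)%N -> G`_i != 0.
Proof. by move=> hi; apply: G_nzg; exact: mem_nth. Qed.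
Lemma G_Ig g : g \in G -> I g.
Proof. by case: HG => [[_ h _] _ _ _]; apply: h. Qed.
Lemma G_I i : (i < r)%N -> I G`_i.
Proof. by move=> hi; apply: G_Ig; exact: mem_nth. Qed.
Lemma G_mon i : (i < r)%N -> G`_i@_(t i) = 1.
Proof. by case: HG => [_ _ h _] hi; apply: h; exact: mem_nth. Qed.
Lemma G_uniq : uniq G.
Proof. by case: HG. Qed.
Lemma G_red i k m : (i < r)%N -> (k < r)%N -> k != i -> m \in msupp G`_i -> ~~ tdvd (t k) m.
Proof.
case: HG => [_ _ _ h] ir kr ki ms.
apply: (h _ _ _ _ _ _ ms); try exact: mem_nth.
by rewrite nth_uniq // ?G_uniq // eq_sym.
Qed.
Lemma G_gb f : I f -> f != 0 -> exists2 k, (k < r)%N & tdvd (t k) (LT le f).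
Proof.
case: HG => [[_ _ h] _ _ _] If nz; have [g gG d] := h f If nz.
by exists (index g G); rewrite ?index_mem ?nth_index.
Qed.

Lemma ltT_irr m : ~~ ltT le m m.
Proof. by rewrite /ltT eqxx andbF. Qed.

Lemma t_lt i j : (i < j)%N -> (j < r)%N -> ltT le (t i) (t j).
Proof.
move=> ij jr.
suff H : forall d, (i + d.+1 < r)%N -> ltT le (t i) (t (i + d.+1)).
  have E : (i + (j - i.+1).+1 = j)%N by lia.
  by rewrite -E; apply: H; rewrite E.
elim => [|d IH] h; first by rewrite addn1; apply: Hsort; rewrite -addn1.
apply: (ltT_trans Hle (IH _)); first by lia.
have -> : (i + d.+2 = (i + d.+1).+1)%N by lia.
by apply: Hsort; lia.
Qed.

Lemma t_idx i k : (i < r)%N -> (k < r)%N -> ltT le (t k) (t i) -> (k < i)%N.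
Proof.
move=> ir kr h; case: (ltngtP k i) => // h'.
  by have := ltT_trans Hle (t_lt h' kr) h; rewrite (negbTE (ltT_irr _)).
by move: h; rewrite h' (negbTE (ltT_irr _)).
Qed.

Lemma t_dvd_eq i k : (i < r)%N -> (k < r)%N -> tdvd (t k) (t i) -> k = i.
Proof.
move=> ir kr h; case: (eqVneq k i) => // ne.
by have := G_red ir kr ne (LT_mem Hle (G_nz ir)); rewrite h.
Qed.

Lemma t_inj i j : (i < r)%N -> (j < r)%N -> t i = t j -> i = j.
Proof. by move=> ir jr E; apply: (t_dvd_eq jr ir); rewrite E /tdvd lepm_refl. Qed.

Lemma Gt_nz x : x \in Gt -> x != 0.
Proof. by case: HGt => [[h _ _] _]; apply: h. Qed.
Lemma Gt_gen f : in_ideal_gen Gt f <-> in_ideal_gen (map (@prim n) G) f.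
Proof. by case: HGt => [[_ h _] _]. Qed.
Lemma Gt_dvd f : in_ideal_gen Gt f -> f != 0 -> exists2 g, g \in Gt & LM_dvd le g f.
Proof. by case: HGt => [[_ _ h] _]; apply: h. Qed.
Lemma Gt_min i j : (i < s)%N -> (j < s)%N -> i != j -> ~~ LM_dvd le Gt`_i Gt`_j.
Proof. by case: HGt => [_ h]; apply: h. Qed.

Lemma primQ g : g \in G -> toQ (prim g) = ((den g)%:R / (content g)%:R) *: g.
Proof. by move=> gG; apply: toQ_prim; apply: G_nzg. Qed.

Lemma primc_nz g : g \in G -> ((den g)%:R / (content g)%:R : rat) != 0.
Proof.
move=> gG; rewrite mulf_neq0 ?invr_eq0 ?pnatr_eq0 -?lt0n ?den_gt0 //.
by rewrite lt0n content_neq0 // G_nzg.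
Qed.

Lemma J_I f : in_ideal_gen (map (@prim n) G) f -> I (toQ f).
Proof.
apply: gen_toQ => // x /mapP[g gG ->].
by rewrite primQ //; apply: ideal_Z => //; apply: G_Ig.
Qed.

Lemma Gt_J x : x \in Gt -> in_ideal_gen Gt x.
Proof. exact: gen_mem. Qed.

Lemma Gt_I x : x \in Gt -> I (toQ x).
Proof. by move=> xG; apply: J_I; apply/Gt_gen; apply: Gt_J. Qed.

Lemma J_LT f : in_ideal_gen Gt f -> f != 0 -> exists2 k, (k < r)%N & tdvd (t k) (LT le f).
Proof.
move=> fJ nz; have nzQ : toQ f != 0 by rewrite toQ_eq0.
have [k kr d] := G_gb (J_I (proj1 (Gt_gen f) fJ)) nzQ.
by exists k; rewrite // -(LT_toQ Hle).
Qed.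

Lemma prim_props i : (i < r)%N ->
  [/\ in_ideal_gen Gt (prim G`_i), prim G`_i != 0 & LT le (prim G`_i) = t i].
Proof.
move=> ir; have gG : G`_i \in G by exact: mem_nth.
split.
- by apply/Gt_gen; apply: gen_mem; apply: map_f.
- by rewrite -toQ_eq0 primQ // scaler_eq0 negb_or primc_nz // G_nz.
- by rewrite -(LT_toQ Hle) primQ // (LT_scale Hle) // primc_nz.
Qed.

Lemma Gt_uniqLT a b : (a < s)%N -> (b < s)%N -> LT le Gt`_a = LT le Gt`_b -> a = b.
Proof.
move=> ar br E.
set x := Gt`_a; set y := Gt`_b.
have xG : x \in Gt by exact: mem_nth.
have yG : y \in Gt by exact: mem_nth.
have xnz := Gt_nz xG; have ynz := Gt_nz yG.
have [u [v Euv]] := Bezoutz (LC le x) (LC le y).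
set d := gcdz (LC le x) (LC le y) in Euv.
have dnz : d != 0 by rewrite gcdz_eq0 negb_and LC_neq0.
set z := u *: x + v *: y.
have zt : z@_(LT le x) = d by rewrite mcoeffD !mcoeffZ -Euv /LC E.
have zsupp m : m \in msupp z -> le m (LT le x).
  move/msuppD_le; rewrite mem_cat => /orP[/msuppZ_le h|/msuppZ_le h].
    exact: LT_max.
  by rewrite E; apply: LT_max.
have zLT : LT le z = LT le x.
  by apply: (LT_eq Hle) => //; rewrite mcoeff_msupp zt.
have znz : z != 0 by apply/eqP => z0; move: zt; rewrite z0 mcoeff0 => /esym/eqP; rewrite (negbTE dnz).
have zJ : in_ideal_gen Gt z.
  by apply: ideal_add; [apply: gen_ideal | apply: ideal_Z; [apply: gen_ideal|apply: Gt_J] ..].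
have [g gG] := Gt_dvd zJ znz.
rewrite /LM_dvd zLT /LC zLT zt => /andP[gt gd].
have dx : LM_dvd le g x by rewrite /LM_dvd gt /=; apply: dvdz_trans gd (dvdz_gcdl _ _).
have dy : LM_dvd le g y.
  by rewrite /LM_dvd -E gt /=; apply: dvdz_trans gd (dvdz_gcdr _ _).
have cs : (index g Gt < s)%N by rewrite index_mem.
have ca : index g Gt = a.
  apply/eqP; apply: contraT => ne; have := Gt_min cs ar ne.
  by rewrite nth_index // dx.
have cb : index g Gt = b.
  apply/eqP; apply: contraT => ne; have := Gt_min cs br ne.
  by rewrite nth_index // dy.
by rewrite -ca -cb.
Qed.

Lemma Gt_uniqLT' x y : x \in Gt -> y \in Gt -> LT le x = LT le y -> x = y.
Proof.
move=> xG yG E; rewrite -(nth_index 0 xG) -(nth_index 0 yG).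
by congr nth; apply: Gt_uniqLT; rewrite ?index_mem ?nth_index.
Qed.

Lemma Gt_uniq : uniq Gt.
Proof.
apply/(uniqP 0) => a b; rewrite !inE => ar br E.
by apply: Gt_uniqLT => //; rewrite E.
Qed.

Lemma Gt_exists i : (i < r)%N ->
  exists2 g, g \in Gt & LT le g = t i /\ (LC le g %| LC le (prim G`_i))%Z.
Proof.
move=> ir; have [pJ pnz pLT] := prim_props ir.
have [g gG] := Gt_dvd pJ pnz; rewrite /LM_dvd pLT => /andP[gt gd].
exists g => //; split => //.
have [k kr dk] := J_LT (Gt_J gG) (Gt_nz gG).
have ki := t_dvd_eq ir kr (tdvd_trans dk gt); subst k.
exact: tdvd_anti.
Qed.

Definition cond_a (Gt' : seq {mpoly int[n]}) :=
    (r <= s)%N /\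
    (forall i, (i < r)%N -> LT le Gt'`_i = LT le G`_i) /\
    (forall i, (r <= i < s)%N ->
       exists2 k, (k < r)%N &
         tdvd (LT le G`_k) (LT le Gt'`_i) /\ LT le Gt'`_i != LT le G`_k).

Lemma part_a : exists2 Gt', perm_eq Gt' Gt & cond_a Gt'.
Proof.
pose P i := fun g : {mpoly int[n]} => LT le g == t i.
pose fA i := nth 0 Gt (find (P i) Gt).
have hasP i : (i < r)%N -> has (P i) Gt.
  by move=> ir; have [g gG [gt _]] := Gt_exists ir; apply/hasP; exists g => //; apply/eqP.
have fA_in i : (i < r)%N -> fA i \in Gt by move=> ir; apply: mem_nth; rewrite -has_find hasP.
have fA_LT i : (i < r)%N -> LT le (fA i) = t i by move=> ir; apply/eqP; apply: (nth_find 0 (hasP i ir)).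
pose A := map fA (iota 0 r).
pose B := [seq g <- Gt | LT le g \notin map (LT le) G].
have sA : size A = r by rewrite size_map size_iota.
have Ai i : (i < r)%N -> A`_i = fA i by move=> ir; rewrite (nth_map 0%N) ?size_iota // nth_iota.
have uA : uniq A.
  rewrite map_inj_in_uniq ?iota_uniq // => i j; rewrite !mem_iota !add0n => ir jr E.
  by apply: t_inj => //; rewrite -fA_LT // -fA_LT // E.
have uB : uniq B by apply: filter_uniq; apply: Gt_uniq.
have AB : uniq (A ++ B).
  rewrite cat_uniq uA uB andbT /=; apply/hasPn => x; rewrite mem_filter => /andP[h _].
  apply/negP => /mapP[i]; rewrite mem_iota add0n => ir E.
  by move: h; rewrite E fA_LT // map_f // mem_nth.
have eqm : A ++ B =i Gt.
  move=> x; rewrite mem_cat; apply/idP/idP.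
    case/orP => [/mapP[i]|]; last by rewrite mem_filter => /andP[].
    by rewrite mem_iota add0n => ir ->; apply: fA_in.
  move=> xG; case: (boolP (LT le x \in map (LT le) G)) => h; last by rewrite mem_filter h xG orbT.
  case/mapP: h => g gG E; apply/orP; left; apply/mapP.
  have kr : (index g G < r)%N by rewrite index_mem.
  exists (index g G); first by rewrite mem_iota add0n.
  apply: Gt_uniqLT' => //; first exact: fA_in.
  by rewrite fA_LT // nth_index.
have pe : perm_eq (A ++ B) Gt by apply: uniq_perm => //; apply: Gt_uniq.
have sAB := perm_size pe; rewrite size_cat sA in sAB.
exists (A ++ B) => //; split; first by rewrite -sAB leq_addr.
split.
  by move=> i ir; rewrite nth_cat sA ir Ai // fA_LT.
move=> i /andP[ri iS]; rewrite nth_cat sA ltnNge ri /=.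
have xB : B`_(i - r) \in B by apply: mem_nth; rewrite ltn_subLR // sAB.
move: xB; rewrite mem_filter => /andP[h xG].
have [k kr dk] := J_LT (Gt_J xG) (Gt_nz xG).
exists k => //; split => //.
by apply: contra h => /eqP ->; apply: map_f; apply: mem_nth.
Qed.

Lemma part_bc Gt' : perm_eq Gt' Gt -> cond_a Gt' ->
  is_minimal_GB le I (map (@toQ n) (take r Gt')) /\
  (forall i, (i < r)%N -> (LC le Gt'`_i %| LC le (prim G`_i))%Z).
Proof.
move=> pe [rs [hLT _]].
have sz : size Gt' = s := perm_size pe.
have inG i : (i < r)%N -> Gt'`_i \in Gt.
  by move=> ir; rewrite -(perm_mem pe); apply: mem_nth; rewrite sz; apply: leq_trans rs.
set H := map (@toQ n) (take r Gt').
have sH : size H = r by rewrite size_map size_takel // sz.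
have Hi i : (i < r)%N -> H`_i = toQ Gt'`_i.
  by move=> ir; rewrite (nth_map 0) ?size_takel ?sz // nth_take.
have HLT i : (i < r)%N -> LT le H`_i = t i by move=> ir; rewrite Hi // (LT_toQ Hle) hLT.
split; last first.
  move=> i ir; have [g gG [gt gd]] := Gt_exists ir.
  by rewrite -(Gt_uniqLT' gG (inG i ir)) // hLT.
split; last first.
  move=> i j; rewrite sH => ir jr ne; rewrite !HLT //.
  by apply: contra ne => h; apply/eqP; apply: t_dvd_eq jr ir h.
split.
- move=> g /(nthP 0)[i]; rewrite sH => ir <-; rewrite Hi // toQ_eq0.
  by apply: Gt_nz; apply: inG.
- move=> g /(nthP 0)[i]; rewrite sH => ir <-; rewrite Hi //.
  by apply: Gt_I; apply: inG.
- move=> f If nz; have [k kr d] := G_gb If nz.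
  by exists H`_k; [apply: mem_nth; rewrite sH | rewrite HLT].
Qed.

Lemma pint0 p : prime p -> pint p 0.
Proof. by move=> pP; have := pint_int pP 0; rewrite rmorph0. Qed.

Definition PP p i (f : {mpoly rat[n]}) :=
  [/\ I f, f@_(t i) = 1, (forall m, m \in msupp f -> le m (t i)) & (forall m, pint p f@_m)].

Lemma step_d p i : prime p -> (i < r)%N -> (forall j, (j < i)%N -> forall m, pint p (G`_j)@_m) ->
  forall f, PP p i f -> f != G`_i -> exists f', PP p i f' /\
    (f' != G`_i -> ltT le (LT le (f' - G`_i)) (LT le (f - G`_i))).
Proof.
move=> pP ir Gpint f [If f1 fsupp fpint] fne.
set gi := G`_i; set ti := t i.
set d := f - gi.
have dnz : d != 0 by rewrite subr_eq0.
have Id : I d := ideal_sub HI If (G_I ir).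
set m := LT le d.
have [k kr dk] := G_gb Id dnz.
have dti : d@_ti = 0 by rewrite mcoeffB f1 G_mon // subrr.
have dsupp m' : m' \in msupp d -> le m' ti.
  move/msuppB_le; rewrite mem_cat => /orP[/fsupp //|h]; exact: LT_max.
have md : m \in msupp d := LT_mem Hle dnz.
have mlt : ltT le m ti.
  rewrite /ltT dsupp //=; apply/eqP => E; move: md; rewrite mcoeff_msupp E dti eqxx //.
have ltk : ltT le (t k) ti := le_ltT_trans Hle (le_tdvd Hle dk) mlt.
have ki : (k < i)%N := t_idx ir kr ltk.
have kne : k != i by rewrite neq_ltn ki.
have mgi : m \notin msupp gi.
  by apply/negP => h; have := G_red ir kr kne h; rewrite dk.
have gim : gi@_m = 0 := memN_msupp_eq0 mgi.
set a := f@_m.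
have dm : d@_m = a by rewrite mcoeffB gim subr0.
set u := (m - t k)%MM.
have um : (u + t k)%MM = m by rewrite submK.
set q := G`_k * 'X_[u].
have qsupp v : v \in msupp q -> le v m.
  case/msuppMX_mem => w wG ->; rewrite -um addmC [(u + _)%MM]addmC.
  by apply: le_addr => //; apply: LT_max.
have qm : q@_m = 1 by rewrite /q -um mcoeffMX G_mon.
have qti : q@_ti = 0.
  apply: memN_msupp_eq0; apply/negP => h.
  have := qsupp _ h; exact: (ltT_le_anti Hle mlt).
have qpint v : pint p q@_v.
  rewrite mcoeffMX_gen; case: ifP => _; [exact: Gpint | exact: pint0].
have Iq : I q by rewrite /q mulrC; apply: ideal_mul => //; apply: G_I.
exists (f - a *: q); split.
  split.
  - by apply: ideal_sub => //; apply: ideal_Z.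
  - by rewrite mcoeffB mcoeffZ qti mulr0 subr0.
  - move=> v /msuppB_le; rewrite mem_cat => /orP[/fsupp //|/msuppZ_le h].
    by apply: le_trans' (qsupp _ h) _; case/andP: mlt.
  - move=> v; rewrite mcoeffB mcoeffZ; apply: (pintD pP); first exact: fpint. by apply: pintN; apply: (pintM pP); [exact: fpint | exact: qpint].
move=> ne'.
have d'E : f - a *: q - gi = d - a *: q by rewrite /d addrAC.
have d'nz : d - a *: q != 0 by rewrite -d'E subr_eq0.
have d'm : (d - a *: q)@_m = 0 by rewrite mcoeffB mcoeffZ qm mulr1 dm subrr.
have l1 := LT_mem Hle d'nz.
rewrite d'E /ltT; apply/andP; split.
  move: l1 => /msuppB_le; rewrite mem_cat => /orP[h|/msuppZ_le h]; [exact: LT_max | exact: qsupp].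
by apply/eqP => E; move: l1; rewrite mcoeff_msupp E d'm eqxx.
Qed.

Lemma part_d h i p : h \in Gt -> LT le h = t i -> (i < r)%N -> prime p ->
  (p %| den G`_i)%N -> (forall j, (j < i)%N -> ~~ (p %| den G`_j)%N) ->
  (p%:Z %| LC le h)%Z.
Proof.
move=> hG hLT ir pP pd pj.
apply: contraT => hnd.
have hc : ~~ (p %| `|LC le h|)%N by move: hnd; rewrite dvdzE absz_nat.
have cnz : LC le h != 0 := LC_neq0 Hle (Gt_nz hG).
have gi_np : ~ (forall m, pint p G`_i@_m).
  move=> H; have [m ms pm] := @biglcm_dvd_prime _ (msupp G`_i) (fun m => `|denq G`_i@_m|%N) p pP pd.
  by have := pint_denq (H m); rewrite pm.
have Gpint j : (j < i)%N -> forall m, pint p (G`_j)@_m.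
  move=> ji m; apply: denq_pint; apply: contra (pj j ji) => h'.
  exact: dvdn_trans h' (denq_dvd_den _ _).
set f0 := ((LC le h)%:~R)^-1 *: toQ h.
have P0 : PP p i f0.
  split.
  - by apply: ideal_Z => //; apply: Gt_I.
  - by rewrite mcoeffZ mcoeff_toQ -hLT mulVf // intr_eq0.
  - by move=> m /msuppZ_le; rewrite msupp_toQ -hLT; apply: LT_max.
  - move=> m; rewrite mcoeffZ mcoeff_toQ mulrC; apply: pint_divz => //.
    exact: pint_int.
have neq f : PP p i f -> f != G`_i.
  by move=> [_ _ _ H]; apply/eqP => E; apply: gi_np; rewrite -E.
pose X := {f : {mpoly rat[n]} | PP p i f}.
have stepX : forall x : X, exists y : X,
    ltT le (LT le (sval y - G`_i)) (LT le (sval x - G`_i)).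
  move=> [f Pf]; have [f' [Pf' lt]] := step_d pP ir Gpint Pf (neq f Pf).
  by exists (exist _ f' Pf'); apply: lt; apply: neq.
pose nx (x : X) := proj1_sig (constructive_indefinite_description _ (stepX x)).
have nxP x : ltT le (LT le (sval (nx x) - G`_i)) (LT le (sval x - G`_i)).
  exact: (proj2_sig (constructive_indefinite_description _ (stepX x))).
exfalso; apply: (no_desc Hle (x := fun k => LT le (sval (iter k nx (exist _ f0 P0)) - G`_i))) => k.
by rewrite iterS; apply: nxP.
Qed.

End Main.

Unset Implicit Arguments.
Set Strict Implicit.

Theorem theorem3p7
  (n : nat) (le : rel 'X_{1..n}) (Hle : term_order le)
  (I : {mpoly rat[n]} -> Prop) (HI : is_ideal I)
  (HI0 : exists f, I f /\ f != 0)
  (G : seq {mpoly rat[n]}) (HG : is_reduced_GB le I G)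
  (Hsort : forall i, (i.+1 < size G)%N -> ltT le (LT le G`_i) (LT le G`_i.+1))
  (Gt : seq {mpoly int[n]}) (HGt : is_minimal_strong_GB le (map (@prim n) G) Gt) :
  let r := size G in
  let s := size Gt in
  let cond_a := fun Gt' : seq {mpoly int[n]} =>
    (r <= s)%N /\
    (forall i, (i < r)%N -> LT le Gt'`_i = LT le G`_i) /\
    (forall i, (r <= i < s)%N ->
       exists2 k, (k < r)%N &
         tdvd (LT le G`_k) (LT le Gt'`_i) /\ LT le Gt'`_i != LT le G`_k) in
  (* (a) *)
  (exists2 Gt', perm_eq Gt' Gt & cond_a Gt') /\
  (forall Gt', perm_eq Gt' Gt -> cond_a Gt' ->
     (* (b) *)
     is_minimal_GB le I (map (@toQ n) (take r Gt')) /\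
     (* (c) *)
     (forall i, (i < r)%N -> (LC le Gt'`_i %| LC le (prim G`_i))%Z) /\
     (* (d) *)
     (forall i p, (i < r)%N -> prime p -> (p %| den G`_i)%N ->
        (forall j, (j < i)%N -> ~~ (p %| den G`_j)%N) ->
        (p%:Z %| LC le Gt'`_i)%Z)).
Proof.
move=> r s cond_a0.
split; first exact: (part_a Hle HI HG HGt).
move=> Gt' pe ca.
have ca' : cond_a le G Gt Gt' := ca.
have [hb hc] := part_bc Hle HI HG HGt pe ca'.
split => //; split => //.
move=> i p ir pP pd pj.
have [rs [hLT _]] := ca'.
have sz := perm_size pe.
have hG : Gt'`_i \in Gt.
  by rewrite -(perm_mem pe); apply: mem_nth; rewrite sz; apply: leq_trans rs.
exact: (part_d Hle HI HG Hsort HGt hG (hLT i ir) ir pP pd pj).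
Qed.
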